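(* Let $\delta\ge 2$, $n\ge 8\delta-7$ and $s$ be integers with $\delta+1\le s\le n/2$. Then $$\rho_{\mathcal D}\big(K_s\vee(K_{n-2s+1}\cup(s-1)K_1)\big)\ >\ \rho_{\mathcal D}\big(K_\delta\vee(K_{n-2\delta+1}\cup(\delta-1)K_1)\big).$$
   Context: For a connected graph $G$, $\mathcal D(G)$ is its distance matrix (entry $(i,j)$ is the distance between the $i$-th and $j$-th vertices) and $\rho_{\mathcal D}(G)$ its largest eigenvalue. $K_m$ is the complete graph on $m$ vertices, $tK_1$ the edgeless graph on $t$ vertices, $\cup$ disjoint union, and $\vee$ the join. *)

(* Defs.v *)
From HB Require Import structures.
From mathcomp Require Import all_boot all_order all_algebra.
From mathcomp Require Import reals.
Set Implicit Arguments. Unset Strict Implicit. Unset Printing Implicit Defensive.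
Import Order.TTheory GRing.Theory Num.Theory.

(* Simple graphs are symmetric irreflexive relations on a finType. *)

Fixpoint walkn (T : finType) (e : rel T) (k : nat) (x y : T) : bool :=
  if k is k'.+1 then [exists z, e x z && walkn e k' z y] else x == y.

(* Graph distance: least k with a walk of length k (shortest walks are
   paths, of length < #|T|); defaults to #|T| if unreachable, which never
   happens in a connected graph. *)
Definition gdist (T : finType) (e : rel T) (x y : T) : nat :=
  \big[minn/#|T|]_(k < #|T| | walkn e k x y) k.

Definition distmx (R : nzRingType) (n : nat) (e : rel 'I_n) : 'M[R]_n :=
  \matrix_(i, j) ((gdist e i j)%:R)%R.

Definition largest_eig (R : realFieldType) (n : nat) (A : 'M[R]_n) (r : R) :=
  eigenvalue A r /\ (forall b, eigenvalue A b -> b <= r)%R.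

(* The graph K_s \/ (K_{n-2s+1} u (s-1)K_1) on vertex set 'I_n:
   vertices 0..s-1 form K_s (joined to everything), vertices
   s..n-s form K_{n-2s+1}, vertices n-s+1..n-1 are the s-1 isolated K_1's. *)
Definition inB (n s : nat) (i : 'I_n) : bool := (s <= i) && (i <= n - s).
Arguments inB : clear implicits.
Definition Kjoin (n s : nat) : rel 'I_n :=
  fun i j => (i != j) && [|| i < s, j < s | inB n s i && inB n s j].
Arguments Kjoin : clear implicits.

(* Main.v *)
Require Import Defs.
From HB Require Import structures.
From mathcomp Require Import all_boot all_order all_algebra.
From mathcomp Require Import reals.
From mathcomp Require Import ring lra zify.
Import Order.TTheory GRing.Theory Num.Theory.
Local Open Scope ring_scope.

Definition yv {R : realFieldType} (t : R) := (t+1)*(t+2).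
Definition zv {R : realFieldType} (N A t : R) := (t+1)*(t + (N - 2*A + 1) + 1).
Definition xv {R : realFieldType} (N A t : R) := (t+1)*(t+2) - (A-1)*(t + (N-2*A+1) + 1).
Definition pv {R : realFieldType} (N A t : R) :=
  (t - (A-1)) * xv N A t - (N - 2*A+1) * yv t - (A-1) * zv N A t.

Lemma key_id (R : realFieldType) (N S D t : R) :
  pv N S t * (D * xv N D t + (N-2*D+1) * yv t + (D-1) * zv N D t) =
  pv N D t * (S * xv N S t + (N-2*S+1) * yv t + (S-1) * zv N S t)
  - (S-D) * ((N-2*S+1) * yv t * yv t + (N-S-2*D+1) * zv N S t * yv t
             - (D-1) * xv N S t * zv N D t).
Proof. rewrite /pv /xv /yv /zv; ring. Qed.

Lemma pos_comp (R : realFieldType) (N A t : R) :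
  1 <= A -> 2 * A <= N -> N - 1 <= t ->
  0 < xv N A t /\ 0 < yv t /\ 0 < zv N A t /\ xv N A t <= zv N A t.
Proof.
move=> h1 h2 h3; rewrite /xv /yv /zv.
split; first nra.
split; first nra.
split; first nra.
nra.
Qed.

Lemma pv_lo (R : realFieldType) (N A : R) :
  2 <= A -> 2 * A <= N -> pv N A (N - 1) < 0.
Proof.
move=> h1 h2.
have -> : pv N A (N - 1) = - ((A-1) * (3*(N-1)^+2 - 6*(A-1)*(N-1) + (N-1)
   + 2*(A-1)^+2 - 3*(A-1) - 1)).
  by rewrite /pv /xv /yv /zv; ring.
rewrite oppr_lt0; apply: mulr_gt0; first lra.
have h3 : 0 <= (N-1) * (N - 1 - 2*(A-1)) by apply: mulr_ge0; lra.
nra.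
Qed.

Lemma pv_hi (R : realFieldType) (N A : R) :
  1 <= A -> 2 * A <= N -> 0 < pv N A (2 * N).
Proof. move=> h1 h2; rewrite /pv /xv /yv /zv; nra. Qed.

Lemma cmp_lem (R : realFieldType) (N S D t : R) :
  2 <= D -> D + 1 <= S -> 2 * S <= N -> 2*D - 2 <= N - S - 2*D + 1 ->
  N - 1 <= t -> pv N D t = 0 -> pv N S t < 0.
Proof.
move=> h1 h2 h3 h4 h5 h0.
have hS1 : 1 <= S by lra.
have [x1 [y1 [z1 xz1]]] := @pos_comp R N S t hS1 h3 h5.
have hD2 : 2 * D <= N by lra.
have hD1 : 1 <= D by lra.
have [x2 [y2 [z2 _]]] := @pos_comp R N D t hD1 hD2 h5.
have W0 : 0 < D * xv N D t + (N-2*D+1) * yv t + (D-1) * zv N D t.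
  have : 0 < D * xv N D t by apply: mulr_gt0; lra.
  have : 0 <= (N-2*D+1) * yv t by apply: mulr_ge0; lra.
  have : 0 <= (D-1) * zv N D t by apply: mulr_ge0; lra.
  lra.
have z2y2 : zv N D t <= 2 * yv t.
  rewrite /zv /yv; have : 0 <= t + 1 by lra. nra.
have K := @key_id R N S D t.
rewrite h0 mul0r sub0r in K.
set x1' := xv N S t in x1 xz1 K *; set y := yv t in y1 y2 z2y2 K W0 *.
set z1' := zv N S t in z1 xz1 K *; set z2' := zv N D t in z2 z2y2 K W0 *.
set x2' := xv N D t in x2 W0 K *.
clearbody x1' y z1' z2' x2'.
have Br : 0 < (N-2*S+1) * y * y + (N-S-2*D+1) * z1' * y - (D-1) * x1' * z2'.
  have e1 : 0 < (N-2*S+1) * y * y by rewrite -mulrA; apply: mulr_gt0; nra.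
  have e2 : (2*D-2) * z1' * y <= (N-S-2*D+1) * z1' * y.
    rewrite -!mulrA; apply: ler_wpM2r => //; apply: mulr_ge0; lra.
  have e3 : (D-1) * x1' * z2' <= (D-1) * x1' * (2 * y).
    apply: ler_wpM2l; first (apply: mulr_ge0; lra). lra.
  have e4 : (D-1) * x1' * (2*y) <= (2*D-2) * z1' * y.
    have -> : (D-1) * x1' * (2*y) = (2*D-2) * x1' * y by ring.
    rewrite -!mulrA; apply: ler_wpM2l; first lra.
    apply: ler_wpM2r; lra.
  lra.
have : pv N S t * (D * x2' + (N - 2 * D + 1) * y + (D - 1) * z2') < 0.
  rewrite K oppr_lt0; apply: mulr_gt0; lra.
rewrite pmulr_llt0 //.
Qed.

Lemma pv_root (R : rcfType) (N A lo hi : R) :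
  lo <= hi -> pv N A lo <= 0 -> 0 <= pv N A hi ->
  exists2 r, lo <= r <= hi & pv N A r = 0.
Proof.
move=> hlh hlo hhi.
pose c := A - 1; pose b := N - 2*A + 1.
pose P : {poly R} := ('X - c%:P) * (('X + 1%:P) * ('X + 2%:P) - c%:P * ('X + (b+1)%:P))
   - b%:P * (('X + 1%:P) * ('X + 2%:P)) - c%:P * (('X + 1%:P) * ('X + (b+1)%:P)).
have HP : forall t, P.[t] = pv N A t.
  move=> t; rewrite /P !(hornerD, hornerM, hornerX, hornerC, hornerN) /pv /xv /yv /zv /c /b; ring.
have H : P.[lo] <= 0 <= P.[hi] by rewrite !HP hlo hhi.
have [r hr] := @poly_ivt R P lo hi hlh H.
by rewrite /root HP => /eqP; exists r.
Qed.

Lemma perron_bound (R : realFieldType) n (D : 'M[R]_n) (u : 'rV[R]_n) r :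
  (forall i j, D i j = D j i) -> (forall i j, 0 <= D i j) ->
  (forall i, 0 < u 0 i) -> u *m D = r *: u ->
  forall b, eigenvalue D b -> b <= r.
Proof.
move=> sym pos upos Hu b /eigenvalueP [v Hv vnz].
have [j0 hj0] : exists j, v 0 j != 0.
  case: (pickP (fun j => v 0 j != 0)) => [j hj|h]; first by exists j.
  case/negP: vnz; apply/eqP/rowP => j; rewrite !mxE.
  by move/negbFE/eqP: (h j).
pose S := \sum_j `|v 0 j| * u 0 j.
have S0 : 0 < S.
  rewrite /S (bigD1 j0) //=; apply: ltr_pwDl.
    by apply: mulr_gt0; [rewrite normr_gt0 | exact: upos].
  by apply: sumr_ge0 => j _; apply: mulr_ge0 => //; apply: ltW.
have key : `|b| * S <= r * S.
  have e1 : `|b| * S = \sum_j `|\sum_i v 0 i * D i j| * u 0 j.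
    rewrite /S mulr_sumr; apply: eq_bigr => j _.
    have := congr1 (fun M : 'rV[R]_n => M 0 j) Hv; rewrite !mxE => ->.
    by rewrite normrM mulrA.
  have e2 : r * S = \sum_i `|v 0 i| * \sum_j D i j * u 0 j.
    rewrite /S mulr_sumr; apply: eq_bigr => i _.
    have := congr1 (fun M : 'rV[R]_n => M 0 i) Hu; rewrite !mxE => Hi.
    have -> : \sum_j D i j * u 0 j = r * u 0 i.
      rewrite -Hi; apply: eq_bigr => j _; by rewrite sym mulrC.
    by rewrite mulrCA.
  rewrite e1 e2.
  under [X in _ <= X]eq_bigr => i _ do rewrite mulr_sumr.
  rewrite exchange_big /=; apply: ler_sum => j _.
  idtac.
  apply: le_trans (ler_wpM2r _ (ler_norm_sum _ _ _)) _; first exact: ltW.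
  rewrite mulr_suml; apply: ler_sum => i _.
  rewrite normrM (ger0_norm (pos i j)) mulrA.
  done.
have : `|b| <= r by rewrite -(ler_pM2r S0).
by apply: le_trans; exact: ler_norm.
Qed.

Lemma bigmin_le (I : eqType) (r : seq I) (P : pred I) (F : I -> nat) N x :
  x \in r -> P x -> (\big[minn/N]_(k <- r | P k) F k <= F x)%N.
Proof.
elim: r => // y r IH; rewrite inE big_cons => /orP [/eqP -> Px | xr Px].
  by rewrite Px geq_minl.
case: (P y); last exact: IH.
by apply: leq_trans (geq_minr _ _) _; exact: IH.
Qed.

Lemma bigmin_first N (P : pred 'I_N) k0 (H : (k0 < N)%N) :
  P (Ordinal H) -> (forall k : 'I_N, (k < k0)%N -> ~~ P k) ->
  \big[minn/N]_(k < N | P k) k = k0.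
Proof.
move=> Pk0 Hlt; apply/eqP; rewrite eqn_leq; apply/andP; split.
  have := @bigmin_le _ (index_enum 'I_N) P (fun k : 'I_N => nat_of_ord k) N (Ordinal H).
  by rewrite mem_index_enum => /(_ isT Pk0).
apply: (big_ind (fun m => k0 <= m)%N); first exact: ltnW.
  by move=> x y hx hy; rewrite leq_min hx hy.
move=> k Pk; rewrite leqNgt; apply/negP => lt; by move/negP: (Hlt k lt).
Qed.

Lemma walk1 (T : finType) (e : rel T) x y : walkn e 1 x y = e x y.
Proof.
rewrite /=; apply/existsP/idP => [[z /andP[h /eqP <-]] // | h].
by exists y; rewrite h eqxx.
Qed.

Lemma gdistK n a (ha : (0 < a)%N) (hn : (2 < n)%N) (i j : 'I_n) :
  gdist (Kjoin n a) i j = if i == j then 0%N else if Kjoin n a i j then 1%N else 2%N.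
Proof.
rewrite /gdist card_ord.
have h0 : (0 < n)%N by apply: leq_trans hn.
have h1 : (1 < n)%N by apply: leq_trans hn.
case: eqP => [<-|/eqP ij].
  apply: (@bigmin_first n _ 0 h0) => //=; by move=> k.
case eij: (Kjoin n a i j).
  apply: (@bigmin_first n _ 1 h1); first by rewrite walk1.
  by move=> k; rewrite ltnS leqn0 => /eqP -> /=.
apply: (@bigmin_first n _ 2 hn).
  change [exists z, Kjoin n a i z && walkn (Kjoin n a) 1 z j]; apply/existsP; exists (Ordinal h0); rewrite walk1.
  have hi : i != Ordinal h0.
    apply/negP => /eqP ei; move: eij; rewrite /Kjoin ij ei /=.
    by rewrite ha.
  have hj : Ordinal h0 != j.
    apply/negP => /eqP ej; move: eij; rewrite /Kjoin ij -ej /=.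
    by rewrite ha !orbT.
  by rewrite /Kjoin hi hj /= ha !orbT.
move=> k; case: k => [[|[|k]] hk] //= _.
  by change (~~ walkn (Kjoin n a) 1 i j); rewrite walk1 eij.
Qed.



Definition cls (n a i : nat) : nat := if (i < a)%N then 0%N else if (i <= n - a)%N then 1%N else 2%N.

Lemma const_piece (R : comNzRingType) n a (g : nat -> R) lo hi k :
  (lo <= hi)%N -> (forall i, (lo <= i < hi)%N -> cls n a i = k) ->
  \sum_(lo <= i < hi) g (cls n a i) = (hi - lo)%:R * g k.
Proof.
move=> hlh H.
transitivity (\sum_(lo <= i < hi) g k).
  by apply: eq_big_nat => i hi'; rewrite H.
by rewrite sumr_const_nat mulr_natl.
Qed.

Lemma cls_sum (R : comNzRingType) n a (g : nat -> R) :
  (1 <= a)%N -> (2 * a <= n)%N ->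
  \sum_(i < n) g (cls n a i) =
  a%:R * g 0%N + (n%:R - 2 * a%:R + 1) * g 1%N + (a%:R - 1) * g 2%N.
Proof.
move=> h1 h2.
rewrite -(big_mkord xpredT (fun i => g (cls n a i))).
have s1 : \sum_(0 <= i < n) g (cls n a i) =
   \sum_(0 <= i < a) g (cls n a i) + \sum_(a <= i < n) g (cls n a i).
  by apply: big_cat_nat; lia.
have s2 : \sum_(a <= i < n) g (cls n a i) =
   \sum_(a <= i < n - a + 1) g (cls n a i) + \sum_(n - a + 1 <= i < n) g (cls n a i).
  by apply: big_cat_nat; lia.
rewrite s1 s2.
rewrite (@const_piece R n a g 0 a 0); last first.
- by move=> i /andP [_ hi]; rewrite /cls hi.
- lia.
rewrite (@const_piece R n a g a (n - a + 1) 1); last first.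
- move=> i /andP [hi1 hi2]; rewrite /cls.
  have -> : (i < a)%N = false by lia.
  by have -> : (i <= n - a)%N = true by lia.
- lia.
rewrite (@const_piece R n a g (n - a + 1) n 2); last first.
- move=> i /andP [hi1 hi2]; rewrite /cls.
  have -> : (i < a)%N = false by lia.
  by have -> : (i <= n - a)%N = false by lia.
- lia.
have -> : (a - 0)%N = a by lia.
have -> : (n - a + 1 - a)%N = ((n - 2 * a) + 1)%N by lia.
have -> : (n - (n - a + 1))%N = (a - 1)%N by lia.
rewrite natrD natrB // natrB // natrM /=; ring.
Qed.

Definition ddE (k l : nat) : bool := [|| k == 0, l == 0 | (k == 1) && (l == 1)]%N.

Lemma cls0 n a (i : nat) : (cls n a i == 0)%N = (i < a)%N.
Proof. by rewrite /cls; case: ifP => //; case: ifP. Qed.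

Lemma cls1 n a (i : 'I_n) : (cls n a i == 1)%N = inB n a i.
Proof.
rewrite /cls /inB; case: ltnP => h //=.
by case: ifP.
Qed.

Lemma cls_lt3 n a i : (cls n a i < 3)%N.
Proof. by rewrite /cls; case: ifP => //; case: ifP. Qed.

Lemma Kjoin_cls n a (i j : 'I_n) :
  Kjoin n a i j = (i != j) && ddE (cls n a i) (cls n a j).
Proof. by rewrite /Kjoin /ddE !cls0 !cls1. Qed.

Definition dR {R : nzRingType} (k l : nat) : R := if ddE k l then 1 else 2.

Lemma dist_entry (R : nzRingType) n a (ha : (0 < a)%N) (hn : (2 < n)%N) (i j : 'I_n) :
  distmx R (Kjoin n a) i j = if i == j then 0 else dR (cls n a i) (cls n a j).
Proof.
rewrite mxE gdistK // Kjoin_cls; case: eqP => //= _.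
by rewrite /dR; case: ddE.
Qed.

Lemma ddE_sym k l : ddE k l = ddE l k.
Proof. by rewrite /ddE orbCA andbC. Qed.

Lemma dist_sym (R : nzRingType) n a (ha : (0 < a)%N) (hn : (2 < n)%N) (i j : 'I_n) :
  distmx R (Kjoin n a) i j = distmx R (Kjoin n a) j i.
Proof. by rewrite !dist_entry // eq_sym /dR ddE_sym. Qed.

Lemma dist_ge0 (R : realFieldType) n a (ha : (0 < a)%N) (hn : (2 < n)%N) (i j : 'I_n) :
  0 <= distmx R (Kjoin n a) i j.
Proof. by rewrite dist_entry //; case: eqP => // _; rewrite /dR; case: ddE. Qed.

Definition vec {R : Type} (x y z : R) (k : nat) : R :=
  if (k == 0)%N then x else if (k == 1)%N then y else z.

Lemma from_pv (R : comNzRingType) (P L M : R) : M - L = P -> P = 0 -> L = M.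
Proof. by move=> h hp; apply/eqP; rewrite eq_sym -subr_eq0 h hp. Qed.

Lemma eigvec (R : realFieldType) n a (ha : (1 <= a)%N) (h2 : (2 * a <= n)%N)
   (hn : (2 < n)%N) t :
  pv n%:R a%:R t = 0 ->
  (\row_(i < n) vec (xv n%:R a%:R t) (yv t) (zv n%:R a%:R t) (cls n a i))
     *m distmx R (Kjoin n a) =
  t *: (\row_(i < n) vec (xv n%:R a%:R t) (yv t) (zv n%:R a%:R t) (cls n a i)).
Proof.
move=> Hp; apply/rowP => j; rewrite !mxE.
set x := xv _ _ t; set y := yv t; set z := zv _ _ t.
pose G k : R := vec x y z k * dR k (cls n a j).
transitivity (\sum_(i < n) (G (cls n a i) - (i == j)%:R * G (cls n a j))).
  apply: eq_bigr => i _; rewrite ?mxE gdistK // Kjoin_cls.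
  case: eqP => [->|_] /=; first by rewrite mul1r subrr mulr0n mulr0.
  by rewrite mul0r subr0 /G /dR; case: ddE.
rewrite sumrB cls_sum //.
rewrite (bigD1 j) //= eqxx mul1r big1 => [|i /negbTE ->]; last by rewrite mul0r.
rewrite addr0 /G.
move: (cls_lt3 n a j); case: (cls n a j) => [|[|[|k]]] // _;
  apply: (@from_pv R _ _ _ _ Hp); rewrite /vec /dR /ddE /= /x /y /z /pv /xv /yv /zv; ring.
Qed.

Lemma largest_from (R : realFieldType) n a t (ha : (1 <= a)%N) (h2 : (2 * a <= n)%N)
   (hn : (2 < n)%N) :
  n%:R - 1 <= t -> pv n%:R a%:R t = 0 -> largest_eig (distmx R (Kjoin n a)) t.
Proof.
move=> ht Hp.
have hA1 : 1 <= a%:R :> R by rewrite (ler_nat R 1 a).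
have hA2 : 2 * a%:R <= n%:R :> R.
  by have := h2; rewrite -(ler_nat R) natrM.
have [px [py [pz _]]] := @pos_comp R n%:R a%:R t hA1 hA2 ht.
set u := \row_(i < n) vec (xv n%:R a%:R t) (yv t) (zv n%:R a%:R t) (cls n a i).
have upos : forall i, 0 < u 0 i.
  by move=> i; rewrite mxE /vec; case: ifP => _ //; case: ifP.
have Hu := @eigvec R n a ha h2 hn t Hp.
split.
  apply/eigenvalueP; exists u => //.
  have h0 : (0 < n)%N by apply: leq_trans hn.
  apply/negP => /eqP hu; have := upos (Ordinal h0); by rewrite hu mxE ltxx.
apply: (@perron_bound R n _ u t).
- by move=> i j; apply: dist_sym => //; lia.
- by move=> i j; apply: dist_ge0 => //; lia.
- exact: upos.
- exact: Hu.
Qed.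

Theorem mainTheorem6 (R : realType) (delta n s : nat) :
  (2 <= delta)%N -> (8 * delta - 7 <= n)%N ->
  (delta + 1 <= s)%N -> (2 * s <= n)%N ->
  exists r1 r2 : R,
    largest_eig (distmx R (Kjoin n s)) r1 /\
    largest_eig (distmx R (Kjoin n delta)) r2 /\
    r2 < r1.
Proof.
move=> hd hn hs hsn.
have hn2 : (2 < n)%N by lia.
have c1 : (4 * delta + s <= n + 3)%N by lia.
have c2 : (2 * delta <= n)%N by lia.
have rd2 : 2 <= delta%:R :> R by rewrite (ler_nat R 2 delta).
have rds : delta%:R + 1 <= s%:R :> R by have := hs; rewrite -(ler_nat R) natrD.
have rsn : 2 * s%:R <= n%:R :> R by have := hsn; rewrite -(ler_nat R) natrM.
have rdn : 2 * delta%:R <= n%:R :> R by have := c2; rewrite -(ler_nat R) natrM.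
have rc1 : 2 * delta%:R - 2 <= n%:R - s%:R - 2 * delta%:R + 1 :> R.
  have := c1; rewrite -(ler_nat R) !natrD => h; lra.
have rn0 : 0 <= n%:R :> R by [].
have [r2 /andP [r2lo r2hi] Hr2] : exists2 r : R, n%:R - 1 <= r <= 2 * n%:R & pv n%:R delta%:R r = 0.
  apply: (@pv_root R); first lra.
    by apply: ltW; apply: pv_lo.
  by apply: ltW; apply: pv_hi => //; lra.
have neg := @cmp_lem R n%:R s%:R delta%:R r2 rd2 rds rsn rc1 r2lo Hr2.
have [r1 /andP [r1lo r1hi] Hr1] : exists2 r : R, r2 <= r <= 2 * n%:R & pv n%:R s%:R r = 0.
  apply: (@pv_root R) => //; first exact: ltW.
  by apply: ltW; apply: pv_hi => //; lra.
exists r1, r2; split.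
  apply: largest_from => //; [lia|lra].
split; first by apply: largest_from => //; lia.
rewrite lt_neqAle r1lo andbT; apply/eqP => e; move: neg; by rewrite e Hr1 ltxx.
Qed.
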